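(* For every $n\geq1$, $Z_{\mathbb{A}_n}$ is the disjoint union of (an open subvariety isomorphic to) $Y_{\mathbb{A}_n}$ and (a closed subvariety isomorphic to) $Y_{\mathbb{A}_{n-1}}$. The number of points of $Z_{\mathbb{A}_n}$ over $\mathbb{F}_q$ is $q^{n+1}$.
   Context: For $n\ge1$, $Z_{\mathbb{A}_n}$ is the affine variety in variables $(\alpha,x_1,\dots,x_n,x'_1,\dots,x'_n)$ ($\alpha$ arbitrary) defined by $x_1x'_1=1+\alpha x_2$, $x_ix'_i=1+x_{i-1}x_{i+1}$ for $2\le i\le n-1$, $x_nx'_n=1+x_{n-1}$ (for $n=1$: $x_1x'_1=1+\alpha$). $Y_{\mathbb{A}_n}$ is the open subvariety where $\alpha\neq0$ (the union of the fibers $X_n(\alpha)$ over invertible $\alpha$); by convention $Y_{\mathbb{A}_0}=\mathbb{A}^1\setminus\{0\}$. *)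

(* Defs.v *)
From HB Require Import structures.
From mathcomp Require Import all_boot all_order all_algebra all_field.
Set Implicit Arguments. Unset Strict Implicit. Unset Printing Implicit Defensive.
Import GRing.Theory.
Local Open Scope ring_scope.

(* A point (alpha, x, x') with x = (x_1,...,x_n), x' = (x'_1,...,x'_n):
   x i (i : 'I_n, 0-based) stands for x_{i+1}. *)
Definition pt (n : nat) (R : Type) : Type :=
  (R * {ffun 'I_n -> R} * {ffun 'I_n -> R})%type.

Definition alpha_of n R (p : pt n R) : R := p.1.1.
Definition x_of n R (p : pt n R) : {ffun 'I_n -> R} := p.1.2.
Definition x'_of n R (p : pt n R) : {ffun 'I_n -> R} := p.2.

(* Padded coordinates: xc k = x_k for 1 <= k <= n, xc 0 = alpha,
   xc (n+1) = 1 (and 1 beyond). *)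
Definition xc (R : nzRingType) n (a : R) (x : {ffun 'I_n -> R}) (k : nat) : R :=
  if k == 0%N then a
  else match (insub k.-1 : option 'I_n) with Some i => x i | None => 1 end.

(* Equations of Z_{A_n}:
   x_1 x'_1 = 1 + alpha x_2, x_i x'_i = 1 + x_{i-1} x_{i+1} (2 <= i <= n-1),
   x_n x'_n = 1 + x_{n-1}  (for n = 1: x_1 x'_1 = 1 + alpha);
   uniformly: x_i x'_i = 1 + xc (i-1) * xc (i+1) for 1 <= i <= n. *)
Definition inZ (R : nzRingType) n (p : pt n R) : bool :=
  [forall i : 'I_n,
     x_of p i * x'_of p i ==
       1 + xc (alpha_of p) (x_of p) i * xc (alpha_of p) (x_of p) i.+2].

(* Y_{A_n}: the open subvariety alpha invertible.
   For n = 0 there are no x-coordinates and no equations, so Y_{A_0}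
   is A^1 \ {0}, matching the convention of the paper. *)
Definition inY (R : unitRingType) n (p : pt n R) : bool :=
  inZ p && (alpha_of p \is a GRing.unit).

Definition inC (R : nzRingType) n (p : pt n R) : bool :=
  inZ p && (alpha_of p == 0).

Definition map_pt (R S : nzRingType) (phi : {rmorphism R -> S}) n (p : pt n R)
  : pt n S :=
  (phi (alpha_of p), [ffun i => phi (x_of p i)], [ffun i => phi (x'_of p i)]).

(* A natural isomorphism (of functors of points on commutative rings,
   i.e. an isomorphism of affine schemes over Z) between the subfunctor
   P of pt m and the subfunctor Q of pt k. *)
Definition nat_iso (m k : nat)
  (P : forall R : comUnitRingType, pt m R -> bool)
  (Q : forall R : comUnitRingType, pt k R -> bool) : Prop :=
  exists (f : forall R : comUnitRingType, pt m R -> pt k R)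
         (g : forall R : comUnitRingType, pt k R -> pt m R),
    (forall (R : comUnitRingType) (p : pt m R),
        P R p -> Q R (f R p) /\ g R (f R p) = p) /\
    (forall (R : comUnitRingType) (q : pt k R),
        Q R q -> P R (g R q) /\ f R (g R q) = q) /\
    (forall (R S : comUnitRingType) (phi : {rmorphism R -> S}) (p : pt m R),
        P R p -> f S (map_pt phi p) = map_pt phi (f R p)) /\
    (forall (R S : comUnitRingType) (phi : {rmorphism R -> S}) (q : pt k R),
        Q R q -> g S (map_pt phi q) = map_pt phi (g R q)).

(* Main.v *)
Require Import Defs.
From HB Require Import structures.
From mathcomp Require Import all_boot all_order all_algebra all_field.
Import GRing.Theory.
Local Open Scope ring_scope.

Set Implicit Arguments. Unset Strict Implicit.

Definition ext (R : Type) n (a y : R) (r : pt n R) : pt n.+1 R :=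
  (a, [ffun i => if unlift ord0 i is Some j then x_of r j else alpha_of r],
      [ffun i => if unlift ord0 i is Some j then x'_of r j else y]).

Definition rest (R : Type) n (p : pt n.+1 R) : pt n R :=
  (x_of p ord0, [ffun j => x_of p (lift ord0 j)], [ffun j => x'_of p (lift ord0 j)]).

Lemma restK (R : Type) n (a y : R) (r : pt n R) : rest (ext a y r) = r.
Proof.
case: r => [[b x] x']; rewrite /rest /ext /x_of /x'_of /alpha_of /= ffunE unlift_none.
congr (_, _, _); apply/ffunP => j; by rewrite !ffunE liftK.
Qed.

Lemma extK (R : Type) n (p : pt n.+1 R) : ext (alpha_of p) (x'_of p ord0) (rest p) = p.
Proof.
case: p => [[b x] x']; rewrite /rest /ext /x_of /x'_of /alpha_of /=.
congr (_, _, _); apply/ffunP => i; rewrite !ffunE;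
  by case: unliftP => [j ->|->]; rewrite ?ffunE.
Qed.

Lemma ext_x0 (R : Type) n (a y : R) (r : pt n R) : x_of (ext a y r) ord0 = alpha_of r.
Proof. by rewrite /= ffunE unlift_none. Qed.
Lemma ext_xS (R : Type) n (a y : R) (r : pt n R) j : x_of (ext a y r) (lift ord0 j) = x_of r j.
Proof. by rewrite /= ffunE liftK. Qed.
Lemma ext_x'0 (R : Type) n (a y : R) (r : pt n R) : x'_of (ext a y r) ord0 = y.
Proof. by rewrite /= ffunE unlift_none. Qed.
Lemma ext_x'S (R : Type) n (a y : R) (r : pt n R) j : x'_of (ext a y r) (lift ord0 j) = x'_of r j.
Proof. by rewrite /= ffunE liftK. Qed.

Lemma xc_in (R : nzRingType) n (a : R) (x : {ffun 'I_n -> R}) (i : 'I_n) :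
  xc a x i.+1 = x i.
Proof. by rewrite /xc /= valK. Qed.

Lemma xc_out (R : nzRingType) n (a : R) (x : {ffun 'I_n -> R}) k :
  (n < k)%N -> xc a x k = 1.
Proof.
case: k => // k Hk; rewrite /xc /= insubF //.
by apply/negbTE; rewrite -leqNgt.
Qed.

Lemma xc_extS (R : nzRingType) n (a y : R) (r : pt n R) k :
  xc a (x_of (ext a y r)) k.+1 = xc (alpha_of r) (x_of r) k.
Proof.
case: k => [|j].
  by rewrite (xc_in a (x_of (ext a y r)) ord0) ext_x0.
case: (ltnP j n) => Hj.
  have -> : j.+2 = (lift ord0 (Ordinal Hj)).+1 by rewrite lift0.
  by rewrite xc_in ext_xS (xc_in _ _ (Ordinal Hj)).
by rewrite !xc_out.
Qed.

Lemma inZ_ext (R : nzRingType) n (a y : R) (r : pt n R) :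
  inZ (ext a y r) = (alpha_of r * y == 1 + a * xc (alpha_of r) (x_of r) 1) && inZ r.
Proof.
rewrite /inZ; apply/forallP/andP.
  move=> H; split.
    by have := H ord0; rewrite ext_x0 ext_x'0 xc_extS.
  apply/forallP => j; have := H (lift ord0 j).
  by rewrite lift0 ext_xS ext_x'S !xc_extS.
case=> H0 /forallP H i; case: (unliftP ord0 i) => [j ->|->].
  by rewrite lift0 ext_xS ext_x'S !xc_extS; apply: H.
by rewrite ext_x0 ext_x'0 xc_extS.
Qed.

Lemma inZ_nz (R : nzRingType) n (r : pt n R) :
  inZ r -> (alpha_of r != 0) || (xc (alpha_of r) (x_of r) 1 != 0).
Proof.
case: n r => [|m] r H.
  by rewrite xc_out // oner_neq0 orbT.
have := forallP H ord0; rewrite (xc_in _ _ ord0) => /= E.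
rewrite -negb_and; apply/negP => /andP[/eqP Ha /eqP Hx].
by move: E; rewrite Hx Ha !mul0r addr0 eq_sym oner_eq0.
Qed.

Lemma card_lin (F : finFieldType) (b c : F) : (b != 0) || (c != 0) ->
  #|[set u : F * F | b * u.2 == 1 + u.1 * c]| = #|F|.
Proof.
case: (eqVneq b 0) => [->|Hb] /= Hc.
  have -> : [set u : F * F | 0 * u.2 == 1 + u.1 * c] = (fun y => (- c^-1, y)) @: setT.
    apply/setP => -[al y]; rewrite inE /=; apply/eqP/imsetP => [E|[y' _ [-> ->]]].
      exists y; rewrite ?inE //; congr (_, _).
      apply: (mulIf Hc); rewrite mulNr mulVf //; rewrite mul0r in E.
      by rewrite -[al * c](addKr 1) -E addr0.
    by rewrite mul0r mulNr mulVf // subrr.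
  by rewrite card_imset ?cardsT // => y1 y2 [].
have -> : [set u : F * F | b * u.2 == 1 + u.1 * c] = (fun a => (a, (1 + a * c) / b)) @: setT.
  apply/setP => -[al y]; rewrite inE /=; apply/eqP/imsetP => [E|[y' _ [-> ->]]].
    exists al; rewrite ?inE //; congr (_, _).
    by rewrite -E mulrC mulKf.
  by rewrite mulrC divfK.
by rewrite card_imset ?cardsT // => y1 y2 [].
Qed.

Lemma cardZS (F : finFieldType) n :
  #|[set p : pt n.+1 F | inZ p]| = (#|F| * #|[set r : pt n F | inZ r]|)%N.
Proof.
pose E := fun u : (F * F) * pt n F => ext u.1.1 u.1.2 u.2.
pose D := fun p : pt n.+1 F => ((alpha_of p, x'_of p ord0), rest p).
have ED : cancel E D.
  by move=> [[a y] r]; rewrite /D /E /= restK ext_x'0.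
have DE : cancel D E by move=> p; rewrite /D /E /= extK.
have -> : [set p : pt n.+1 F | inZ p] = E @: [set u | inZ (E u)].
  apply/setP => p; rewrite inE; apply/idP/imsetP => [H|[u Hu ->]].
    by exists (D p); rewrite ?inE DE.
  by move: Hu; rewrite inE.
rewrite card_imset; last exact: can_inj ED.
rewrite -sum1_card big_mkcond /=.
transitivity (\sum_(ay : F * F) \sum_(r : pt n F) (if (ay, r) \in [set u | inZ (E u)] then 1%N else 0%N)).
  by rewrite pair_big; apply: eq_big => // -[].
rewrite exchange_big /=.
rewrite (eq_bigr (fun r => if inZ r then #|F| else 0%N)); last first.
  move=> r _; under eq_bigr do rewrite inE /E /= inZ_ext.
  case Hr: (inZ r).
    rewrite -(card_lin (inZ_nz Hr)) -sum1_card [RHS]big_mkcond /=.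
    by apply: eq_bigr => ay _; rewrite inE andbT.
  by rewrite big1 // => ay _; rewrite andbF.
rewrite -big_mkcond /= sum_nat_const mulnC; congr (_ * _)%N.
by apply: eq_card => r; rewrite inE.
Qed.

Lemma cardZ (F : finFieldType) n :
  #|[set p : pt n F | inZ p]| = (#|F| ^ n.+1)%N.
Proof.
elim: n => [|n IH]; last by rewrite cardZS IH -expnS.
have -> : [set p : pt 0 F | inZ p] = setT.
  apply/setP => p; rewrite !inE /inZ; by apply/forallP => -[].
by rewrite cardsT !card_prod !card_ffun card_ord expn0 expn1 !muln1.
Qed.

Theorem mainTheorem8 (n : nat) (hn : (1 <= n)%N) :
  (* Z_{A_n}(K) is the disjoint union of Y_{A_n}(K) (alpha <> 0) and the
     closed part C(K) (alpha = 0), for every field K *)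
  (forall (K : fieldType) (p : pt n K),
      inZ p = inY p || inC p /\ ~~ (inY p && inC p)) /\
  (* the open part is Y_{A_n} itself, and the closed part alpha = 0 is
     isomorphic to Y_{A_(n-1)} *)
  nat_iso (fun R (p : pt n R) => inC p) (fun R (q : pt n.-1 R) => inY q) /\
  (* point count over F_q *)
  (forall F : finFieldType,
      #|[set p : pt n F | inZ p]| = (#|F| ^ n.+1)%N).
Proof.
split.
  move=> K p; rewrite /inY /inC unitfE.
  by case: (inZ p); case: eqP.
split; last by move=> F; apply: cardZ.
case: n hn => // m _.
exists (fun R p => rest p), (fun R q => ext 0 (alpha_of q)^-1 q).
split.
  move=> R p /andP[Hz /eqP Ha].
  move: Hz; rewrite -{1}(extK p) inZ_ext Ha mul0r addr0 => /andP[/eqP H1 Hr].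
  have Hu : x_of p ord0 \is a GRing.unit.
    by apply/unitrP; exists (x'_of p ord0); rewrite mulrC H1.
  split; first by rewrite /inY Hr.
  rewrite -[RHS]extK Ha; congr ext.
  have H1' : x_of p ord0 * x'_of p ord0 = 1 := H1.
  change ((x_of p ord0)^-1 = x'_of p ord0).
  by rewrite -(mulKr Hu (x'_of p ord0)) H1' mulr1.
split.
  move=> R q /andP[Hq Hu]; split; last by rewrite restK.
  by rewrite /inC /= inZ_ext Hq mul0r addr0 mulrV // eqxx /alpha_of /= eqxx.
split.
  move=> R S phi p _; rewrite /rest /map_pt /x_of /x'_of /alpha_of /=.
  by congr (_, _, _); rewrite ?ffunE //; apply/ffunP => j; rewrite !ffunE.
move=> R S phi q /andP[_ Hu]; rewrite /ext /map_pt /x_of /x'_of /alpha_of /=.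
congr (_, _, _).
- by rewrite rmorph0.
- by apply/ffunP => i; rewrite !ffunE; case: unliftP => [j _|_]; rewrite ?ffunE.
- apply/ffunP => i; rewrite !ffunE; case: unliftP => [j _|_]; rewrite ?ffunE //.
  by rewrite (rmorphV _ Hu).
Qed.
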